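(* For every point $\varrho_K$ of $\mathcal{Q}(r,n)$ (with residue field $K$), the induced map on Zariski tangent spaces $$\imath_*:T_{\varrho_K}\mathcal{Q}(r,n)\to T_{\imath(\varrho_K)}\mathcal{A}(r,n)$$ is injective.
   Context: Fix $V_\infty=\mathbb{C}^r$ with basis $e_a$ and $A_re_a=e_{a+1}$, $e_{r+1}=0$. $\mathcal{Q}(r,n)$ is the fine moduli space of framed cyclic representations $(V,B_1,B_2,B_3,I,J)$ up to $GL(V)$. These have $\dim V=n$ and satisfy $[B_1,B_2]+IJ=0$, $JB_3=A_rJ$, $B_3I=IA_r$ and $[B_3,B_i]=0$ for $i=1,2$; moreover no proper nonzero $B_1,B_2,B_3$-invariant subspace contains $\mathrm{Im}\,I$. $\mathcal{A}(r,n)$ is the fine moduli space of stable ADHM data $(V,B_1,B_2,I,J)$ with $[B_1,B_2]+IJ=0$ and no proper $B_1,B_2$-invariant subspace containing $\mathrm{Im}\,I$. The map $\imath$ forgets $B_3$; it preserves residue fields. *)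

(* Defs.v *)
From HB Require Import structures.
From mathcomp Require Import all_boot all_order all_algebra.
Set Implicit Arguments. Unset Strict Implicit. Unset Printing Implicit Defensive.
Import GRing.Theory.
Local Open Scope ring_scope.

(* Convention: matrices act on COLUMN vectors, so composition of linear maps
   is matrix product in the usual order.  V = K^n, V_oo = K^r,
   B_i : 'M_n, I : V_oo -> V is 'M_(n,r), J : V -> V_oo is 'M_(r,n). *)

(* A_r e_a = e_(a+1), e_(r+1) = 0 : the (i,j) entry is 1 iff i = j+1. *)
Definition Ar (K : fieldType) (r : nat) : 'M[K]_r :=
  \matrix_(i < r, j < r) (((i : nat) == (j : nat).+1)%N)%:R.

Record cdatum (K : fieldType) (r n : nat) := CD {
  cB1 : 'M[K]_n; cB2 : 'M[K]_n; cB3 : 'M[K]_n;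
  cI : 'M[K]_(n, r); cJ : 'M[K]_(r, n) }.

Record adatum (K : fieldType) (r n : nat) := AD {
  aB1 : 'M[K]_n; aB2 : 'M[K]_n; aI : 'M[K]_(n, r); aJ : 'M[K]_(r, n) }.

Definition cforget (K : fieldType) r n (c : cdatum K r n) : adatum K r n :=
  AD (cB1 c) (cB2 c) (cI c) (cJ c).

Definition adhm_eq (K : fieldType) r n (a : adatum K r n) : Prop :=
  aB1 a *m aB2 a - aB2 a *m aB1 a + aI a *m aJ a = 0.

Definition cyclic_eq (K : fieldType) r n (c : cdatum K r n) : Prop :=
  [/\ adhm_eq (cforget c),
      cJ c *m cB3 c = Ar K r *m cJ c,
      cB3 c *m cI c = cI c *m Ar K r,
      cB3 c *m cB1 c - cB1 c *m cB3 c = 0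
    & cB3 c *m cB2 c - cB2 c *m cB3 c = 0].

Definition contains_ImI (K : fieldType) r n (I : 'M[K]_(n, r)) (U : {vspace 'cV[K]_n}) :=
  forall w : 'cV[K]_r, I *m w \in U.
Definition invariant (K : fieldType) n (B : 'M[K]_n) (U : {vspace 'cV[K]_n}) :=
  forall v, v \in U -> B *m v \in U.

Definition Q_stable (K : fieldType) r n (c : cdatum K r n) : Prop :=
  forall U : {vspace 'cV[K]_n},
    invariant (cB1 c) U -> invariant (cB2 c) U -> invariant (cB3 c) U ->
    contains_ImI (cI c) U -> U = 0%VS \/ U = fullv.

Definition A_stable (K : fieldType) r n (a : adatum K r n) : Prop :=
  forall U : {vspace 'cV[K]_n},
    invariant (aB1 a) U -> invariant (aB2 a) U ->
    contains_ImI (aI a) U -> U = fullv.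

(* ---------- matrices over the dual numbers K[eps]/(eps^2) ----------
   A matrix over K[eps] is written A0 + eps A1 and stored as (A0, A1). *)
Definition dmx (K : fieldType) (m n : nat) := ('M[K]_(m, n) * 'M[K]_(m, n))%type.
Definition dmul (K : fieldType) m n p (A : dmx K m n) (B : dmx K n p) : dmx K m p :=
  (A.1 *m B.1, A.1 *m B.2 + A.2 *m B.1).
Definition dadd (K : fieldType) m n (A B : dmx K m n) : dmx K m n := (A.1 + B.1, A.2 + B.2).
Definition dopp (K : fieldType) m n (A : dmx K m n) : dmx K m n := (- A.1, - A.2).
Definition dsub (K : fieldType) m n (A B : dmx K m n) : dmx K m n := dadd A (dopp B).
Definition dconst (K : fieldType) m n (A : 'M[K]_(m, n)) : dmx K m n := (A, 0).
Definition dzero (K : fieldType) m n : dmx K m n := (0, 0).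

(* families over Spec K[eps] (V = K[eps]^n free) *)
Record cfam (K : fieldType) (r n : nat) := CF {
  fB1 : dmx K n n; fB2 : dmx K n n; fB3 : dmx K n n;
  fI : dmx K n r; fJ : dmx K r n }.

Record afam (K : fieldType) (r n : nat) := AF {
  gB1 : dmx K n n; gB2 : dmx K n n; gI : dmx K n r; gJ : dmx K r n }.

Definition fforget (K : fieldType) r n (F : cfam K r n) : afam K r n :=
  AF (fB1 F) (fB2 F) (fI F) (fJ F).

Definition afam_eq (K : fieldType) r n (F : afam K r n) : Prop :=
  dadd (dsub (dmul (gB1 F) (gB2 F)) (dmul (gB2 F) (gB1 F))) (dmul (gI F) (gJ F))
  = dzero K n n.

Definition cfam_eq (K : fieldType) r n (F : cfam K r n) : Prop :=
  [/\ afam_eq (fforget F),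
      dmul (fJ F) (fB3 F) = dmul (dconst (Ar K r)) (fJ F),
      dmul (fB3 F) (fI F) = dmul (fI F) (dconst (Ar K r)),
      dsub (dmul (fB3 F) (fB1 F)) (dmul (fB1 F) (fB3 F)) = dzero K n n
    & dsub (dmul (fB3 F) (fB2 F)) (dmul (fB2 F) (fB3 F)) = dzero K n n].

Definition cfiber (K : fieldType) r n (F : cfam K r n) : cdatum K r n :=
  CD (fB1 F).1 (fB2 F).1 (fB3 F).1 (fI F).1 (fJ F).1.

(* isomorphism of families over K[eps]: g in GL_n(K[eps]) (i.e. g0 invertible)
   with B_i' = g B_i g^-1, I' = g I, J' = J g^-1 *)
Definition afam_iso (K : fieldType) r n (F F' : afam K r n) : Prop :=
  exists g : dmx K n n,
    [/\ g.1 \in unitmx,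
        dmul g (gB1 F) = dmul (gB1 F') g,
        dmul g (gB2 F) = dmul (gB2 F') g,
        dmul g (gI F) = gI F'
      & gJ F = dmul (gJ F') g].

Definition cfam_iso (K : fieldType) r n (F F' : cfam K r n) : Prop :=
  exists g : dmx K n n,
    g.1 \in unitmx /\
    dmul g (fB1 F) = dmul (fB1 F') g /\
    dmul g (fB2 F) = dmul (fB2 F') g /\
    dmul g (fB3 F) = dmul (fB3 F') g /\
    dmul g (fI F) = fI F' /\
    fJ F = dmul (fJ F') g.

(* Main.v *)
Require Import Defs.
From HB Require Import structures.
From mathcomp Require Import all_boot all_order all_algebra.
Set Implicit Arguments. Unset Strict Implicit. Unset Printing Implicit Defensive.
Import GRing.Theory.
Local Open Scope ring_scope.

Definition cm (K : fieldType) n (X Y : 'M[K]_n) := X *m Y - Y *m X.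
Lemma ker_zero (K : fieldType) r n (B1 B2 : 'M[K]_n) (I : 'M[K]_(n,r)) (M : 'M[K]_n) :
 (forall U : {vspace 'cV[K]_n}, Defs.invariant B1 U -> Defs.invariant B2 U -> contains_ImI I U -> U = fullv) ->
 M *m B1 = B1 *m M -> M *m B2 = B2 *m M -> M *m I = 0 -> M = 0.
Proof.
move=> hst h1 h2 hI.
pose f := linfun (mulmx M : 'cV[K]_n -> 'cV[K]_n).
have hU : lker f = fullv.
  apply: hst.
  - move=> v; rewrite !memv_ker !lfunE /= mulmxA h1 -mulmxA => /eqP ->.
    by rewrite mulmx0.
  - move=> v; rewrite !memv_ker !lfunE /= mulmxA h2 -mulmxA => /eqP ->.
    by rewrite mulmx0.
  - by move=> w; rewrite memv_ker lfunE /= mulmxA hI mul0mx.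
apply/matrixP => i j.
have : delta_mx j (0 : 'I_1) \in lker f by rewrite hU memvf.
rewrite memv_ker lfunE /= -colE => /eqP /matrixP /(_ i 0).
by rewrite !mxE.
Qed.
Lemma jac (K : fieldType) n (g a b : 'M[K]_n) : cm (cm g a) b - cm (cm g b) a = cm g (cm a b).
Proof.
rewrite /cm !mulmxBl !mulmxBr !mulmxA !opprB !addrA.
by rewrite [LHS](AC (8)%AC ((1*8*3*6)*((2*5)*(4*7)))%AC) /= !addNr !addr0.
Qed.
Lemma cmB (K : fieldType) n (X Y Z : 'M[K]_n) : cm (X - Y) Z = cm X Z - cm Y Z.
Proof. rewrite /cm mulmxBl mulmxBr !opprB !addrA. by rewrite [LHS](AC (4)%AC (1*4*3*2)%AC). Qed.
Lemma cmD (K : fieldType) n (X Y Z : 'M[K]_n) : cm (X + Y) Z = cm X Z + cm Y Z.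
Proof. by rewrite /cm mulmxDl mulmxDr opprD addrACA. Qed.
Lemma cmr0 (K : fieldType) n (X : 'M[K]_n) : cm X 0 = 0.
Proof. by rewrite /cm mulmx0 mul0mx subrr. Qed.
Lemma cmC (K : fieldType) n (X Y : 'M[K]_n) : cm X Y = - cm Y X.
Proof. by rewrite /cm opprB. Qed.
Lemma conv (K : fieldType) n (B3 B1 b s : 'M[K]_n) : (B3 *m b + s *m B1) - (B1 *m s + b *m B3) = 0 -> cm s B1 = cm b B3.
Proof.
move/eqP; rewrite subr_eq0 => /eqP H; rewrite /cm.
rewrite -[s *m B1](addKr (B3 *m b)) H.
by rewrite [B1 *m s + _]addrC addrA addrK addrC.
Qed.
Lemma Dcomm (K : fieldType) n (B3 B1 b11 b31 c11 c31 g1 : 'M[K]_n) :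
  B3 *m B1 - B1 *m B3 = 0 ->
  (B3 *m b11 + b31 *m B1) - (B1 *m b31 + b11 *m B3) = 0 ->
  (B3 *m c11 + c31 *m B1) - (B1 *m c31 + c11 *m B3) = 0 ->
  b11 + g1 *m B1 = B1 *m g1 + c11 ->
  cm (c31 - b31 - cm g1 B3) B1 = 0.
Proof.
move=> h31 /conv hb /conv hc e.
have hc11 : c11 = b11 + cm g1 B1.
  by rewrite /cm addrA e [B1 *m g1 + _]addrC addrK.
rewrite !cmB hb hc -cmB hc11 [b11 + _]addrC addrK.
have h13 : cm B1 B3 = 0 by rewrite cmC; apply/eqP; rewrite oppr_eq0; apply/eqP.
by rewrite -cmB -/(cm g1 B3) jac h13 cmr0.
Qed.
Lemma solve_r (V : zmodType) (x y z : V) : x + y = z -> y = z - x.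
Proof. by move=> H; apply/esym/eqP; rewrite subr_eq addrC H. Qed.
Lemma DI (K : fieldType) n r (B3 b31 c31 g1 : 'M[K]_n) (I0 i1 : 'M[K]_(n,r)) (A : 'M[K]_r) :
  B3 *m I0 = I0 *m A -> B3 *m i1 + b31 *m I0 = I0 *m 0 + i1 *m A ->
  B3 *m (i1 + g1 *m I0) + c31 *m I0 = I0 *m 0 + (i1 + g1 *m I0) *m A ->
  (c31 - b31 - cm g1 B3) *m I0 = 0.
Proof.
move=> h /solve_r hb /solve_r hc.
rewrite /cm !mulmxBl hb hc -!mulmxA h !mulmxA !mulmx0 !add0r !mulmxDl !mulmxDr.
rewrite !opprB !opprD !mulmxA !addrA.
by rewrite [LHS](AC (8)%AC (((1*6)*(2*8))*((3*5)*(4*7)))%AC) /= !addrN !addNr !addr0.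
Qed.

Theorem lemma3p7 (K : fieldType) (r n : nat) (rho : cdatum K r n) :
  cyclic_eq rho -> Q_stable rho -> A_stable (cforget rho) ->
  forall F F' : cfam K r n,
    cfam_eq F -> cfam_eq F' -> cfiber F = rho -> cfiber F' = rho ->
    afam_iso (fforget F) (fforget F') -> cfam_iso F F'.
Proof.
move=> hcyc _ hst [[B1 b11] [B2 b21] [B3 b31] [I0 i1] [J0 j1]]
  [[B1' c11] [B2' c21] [B3' c31] [I0' i1'] [J0' j1']] hF hF' hfib hfib' hiso.
rewrite -hfib in hcyc hst hfib'.
case: hfib' => ? ? ? ? ?; subst.
move: hcyc hF hF' hiso.
rewrite /cyclic_eq /cfam_eq /afam_eq /afam_iso /cfam_iso /adhm_eq /dmul /dsub /dadd /dopp /dconst /dzero /=.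
move=> [_ _ hI3 h31 h32] [_ _ hFI h1 h2] [_ _ hF'I h1' h2'] [[g0 g1] [/= gu]].
case=> eB1 eB1' [] eB2 eB2' [] eI eI' hJ.
have K0 := fun M => @ker_zero K r n B1 B2 I0 M hst.
have eg : g0 = 1%:M.
  apply/eqP; rewrite -subr_eq0; apply/eqP/K0.
  - by rewrite mulmxBl mulmxBr mul1mx mulmx1 eB1.
  - by rewrite mulmxBl mulmxBr mul1mx mulmx1 eB2.
  - by rewrite mulmxBl eI mul1mx subrr.
subst g0.
rewrite !mul1mx !mulmx1 in eB1' eB2' eI' hJ.
subst i1'.
case: h1 => _ h1; case: h2 => _ h2; case: h1' => _ h1'; case: h2' => _ h2'.
case: hFI => _ hFI; case: hF'I => _ hF'I.
have hD : c31 - b31 - cm g1 B3 = 0.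
  apply: K0.
  - by apply/eqP; rewrite -subr_eq0; apply/eqP; exact: (Dcomm h31 h1 h1' eB1').
  - by apply/eqP; rewrite -subr_eq0; apply/eqP; exact: (Dcomm h32 h2 h2' eB2').
  - exact: DI hI3 hFI hF'I.
exists (1%:M, g1); rewrite /= !mul1mx !mulmx1.
split; first exact: unitmx1.
split; first by rewrite eB1'.
split; first by rewrite eB2'.
split.
  congr pair; move/eqP: hD; rewrite subr_eq0 subr_eq => /eqP ->.
  by rewrite /cm addrA subrKC addrC.
by split.
Qed.
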